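(* Let $\mathfrak g=\mathfrak g(\mathfrak l,V,\mathfrak z,\beta)$ be an admissible Lie algebra and let $x\in\mathfrak g$ be such that $\operatorname{co}(x)$ is pointed. Then $\mathcal O_x\cap(\mathfrak z+\mathfrak l)\neq\emptyset$, i.e. $x$ is conjugate under $\operatorname{Inn}(\mathfrak g)$ to an element of $\mathfrak z+\mathfrak l$.
   Context: All Lie algebras are finite-dimensional and real. $\operatorname{Inn}(\mathfrak g)$ is the group generated by $e^{\operatorname{ad}y}$, $y\in\mathfrak g$; $\mathcal O_x=\operatorname{Inn}(\mathfrak g)x$; $\operatorname{co}(x)$ is the closed convex hull of $\mathcal O_x$. A closed convex subset of a finite-dimensional real vector space is pointed if it contains no affine line, and generating if it spans the space. $\mathfrak g$ is admissible if it contains an $\operatorname{Inn}(\mathfrak g)$-invariant pointed generating closed convex subset. For a reductive Lie algebra $\mathfrak l$, an $\mathfrak l$-module $V$, a real vector space $\mathfrak z$ and an $\mathfrak l$-invariant skew-symmetric bilinear map $\beta:V\times V\to\mathfrak z$, $\mathfrak g(\mathfrak l,V,\mathfrak z,\beta)$ is $\mathfrak z\oplus V\oplus\mathfrak l$ with bracket $[(z,v,x),(z',v',x')]=(\beta(v,v'),x.v'-x'.v,[x,x'])$. Standing facts: every admissible Lie algebra is of this form with $\mathfrak z=\mathfrak z(\mathfrak g)$ the center, $\mathfrak z\oplus V$ the maximal nilpotent ideal, $\mathfrak l$ reductive with every simple ideal compact or hermitian, $\mathfrak l$ containing a compactly embedded Cartan subalgebra $\mathfrak t_{\mathfrak l}$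 such that $\mathfrak t=\mathfrak z+\mathfrak t_{\mathfrak l}$ is a compactly embedded Cartan subalgebra of $\mathfrak g$, $V=[\mathfrak t_{\mathfrak l},V]$, and there is $f\in\mathfrak z^*$ such that $f\circ\beta$ is a symplectic form on $V$ and $v\mapsto f(\beta(y.v,v))$ is positive definite for some $y\in\mathfrak l$. *)

(* Defs.v *)
From HB Require Import structures.
From mathcomp Require Import all_boot all_order all_algebra.
From mathcomp Require Import all_classical all_reals all_analysis.
Set Implicit Arguments. Unset Strict Implicit. Unset Printing Implicit Defensive.
Import Order.TTheory GRing.Theory Num.Theory.
Import numFieldNormedType.Exports.
Local Open Scope classical_set_scope.
Local Open Scope ring_scope.

Section LieDefs.
Variable R : realType.

Definition bilinear_map (m n p : nat)
    (b : 'rV[R]_m -> 'rV[R]_n -> 'rV[R]_p) : Prop :=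
  (forall (a : R) u u' v, b (a *: u + u') v = a *: b u v + b u' v) /\
  (forall (a : R) u v v', b u (a *: v + v') = a *: b u v + b u v').

Definition is_lie_bracket (n : nat) (br : 'rV[R]_n -> 'rV[R]_n -> 'rV[R]_n) : Prop :=
  [/\ bilinear_map br,
      (forall x, br x x = 0) &
      (forall x y z, br x (br y z) + br y (br z x) + br z (br x y) = 0)].

(* matrix of ad x (row-vector convention: v *m ad_mx br x = br x v) *)
Definition ad_mx (n : nat) (br : 'rV[R]_n -> 'rV[R]_n -> 'rV[R]_n) (x : 'rV[R]_n)
  : 'M[R]_n := lin1_mx (br x).

Definition mexp (n : nat) (A : 'M[R]_n) : 'M[R]_n :=
  limn (fun N : nat => \sum_(k < N) ((k`!)%:R)^-1 *: A ^+ k).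

Definition gen_elt (n : nat) (br : 'rV[R]_n -> 'rV[R]_n -> 'rV[R]_n)
  (p : bool * 'rV[R]_n) : 'M[R]_n :=
  if p.1 then mexp (ad_mx br p.2) else invmx (mexp (ad_mx br p.2)).

Definition Inn (n : nat) (br : 'rV[R]_n -> 'rV[R]_n -> 'rV[R]_n) : set 'M[R]_n :=
  [set M | exists s : seq (bool * 'rV[R]_n),
      M = foldr (fun p acc => gen_elt br p *m acc) 1%:M s].

Definition inn_orbit (n : nat) (br : 'rV[R]_n -> 'rV[R]_n -> 'rV[R]_n) (x : 'rV[R]_n)
  : set 'rV[R]_n := [set x *m M | M in Inn br].

Definition conv_hull (n : nat) (S : set 'rV[R]_n) : set 'rV[R]_n :=
  [set v | exists (k : nat) (w : 'I_k -> R) (p : 'I_k -> 'rV[R]_n),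
      [/\ forall i, 0 <= w i, \sum_(i < k) w i = 1, forall i, S (p i) &
          v = \sum_(i < k) w i *: p i]].

Definition co (n : nat) (br : 'rV[R]_n -> 'rV[R]_n -> 'rV[R]_n) (x : 'rV[R]_n)
  : set 'rV[R]_n := closure (conv_hull (inn_orbit br x)).

Definition convex_subset (n : nat) (C : set 'rV[R]_n) : Prop :=
  forall u v (t : R), C u -> C v -> 0 <= t -> t <= 1 -> C (t *: u + (1 - t) *: v).

Definition pointed (n : nat) (C : set 'rV[R]_n) : Prop :=
  ~ exists a d : 'rV[R]_n, d != 0 /\ forall t : R, C (a + t *: d).

Definition generating (n : nat) (C : set 'rV[R]_n) : Prop :=
  forall v, exists (k : nat) (c : 'I_k -> R) (p : 'I_k -> 'rV[R]_n),
    (forall i, C (p i)) /\ v = \sum_(i < k) c i *: p i.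

Definition admissible (n : nat) (br : 'rV[R]_n -> 'rV[R]_n -> 'rV[R]_n) : Prop :=
  exists C : set 'rV[R]_n,
    [/\ closed C, convex_subset C, pointed C, generating C &
        forall M v, Inn br M -> C v -> C (v *m M)].

Definition ad_invariant (n : nat) (br : 'rV[R]_n -> 'rV[R]_n -> 'rV[R]_n)
  (W : 'M[R]_n) : Prop := forall x, (W *m ad_mx br x <= W)%MS.

Definition reductive (n : nat) (br : 'rV[R]_n -> 'rV[R]_n -> 'rV[R]_n) : Prop :=
  is_lie_bracket br /\
  forall W : 'M[R]_n, ad_invariant br W ->
    exists W' : 'M[R]_n, [/\ ad_invariant br W',
        (W :&: W' == (0 : 'M[R]_n))%MS & (W + W' == (1%:M : 'M[R]_n))%MS].

Definition gz (nz nV nl : nat) (u : 'rV[R]_(nz + nV + nl)) : 'rV[R]_nz :=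
  lsubmx (lsubmx u).
Definition gV (nz nV nl : nat) (u : 'rV[R]_(nz + nV + nl)) : 'rV[R]_nV :=
  rsubmx (lsubmx u).
Definition gl (nz nV nl : nat) (u : 'rV[R]_(nz + nV + nl)) : 'rV[R]_nl :=
  rsubmx u.
Definition gmk (nz nV nl : nat) (z : 'rV[R]_nz) (v : 'rV[R]_nV) (x : 'rV[R]_nl)
  : 'rV[R]_(nz + nV + nl) := row_mx (row_mx z v) x.

Definition gbracket (nz nV nl : nat)
  (brl : 'rV[R]_nl -> 'rV[R]_nl -> 'rV[R]_nl)
  (act : 'rV[R]_nl -> 'rV[R]_nV -> 'rV[R]_nV)
  (beta : 'rV[R]_nV -> 'rV[R]_nV -> 'rV[R]_nz)
  (u u' : 'rV[R]_(nz + nV + nl)) : 'rV[R]_(nz + nV + nl) :=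
  gmk (beta (gV u) (gV u'))
      (act (gl u) (gV u') - act (gl u') (gV u))
      (brl (gl u) (gl u')).

Definition is_module (nV nl : nat) (brl : 'rV[R]_nl -> 'rV[R]_nl -> 'rV[R]_nl)
  (act : 'rV[R]_nl -> 'rV[R]_nV -> 'rV[R]_nV) : Prop :=
  bilinear_map act /\
  forall x y v, act (brl x y) v = act x (act y v) - act y (act x v).

Definition invariant_skew (nz nV nl : nat)
  (act : 'rV[R]_nl -> 'rV[R]_nV -> 'rV[R]_nV)
  (beta : 'rV[R]_nV -> 'rV[R]_nV -> 'rV[R]_nz) : Prop :=
  [/\ bilinear_map beta,
      (forall v w, beta w v = - beta v w) &
      (forall x v w, beta (act x v) w + beta v (act x w) = 0)].

End LieDefs.

(* Main.v *)
Require Import Defs.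
From HB Require Import structures.
From mathcomp Require Import all_boot all_order all_algebra.
From mathcomp Require Import all_classical all_reals all_analysis.
Import Order.TTheory GRing.Theory Num.Theory.
Import numFieldNormedType.Exports.
Local Open Scope classical_set_scope.
Local Open Scope ring_scope.

Section Lin.
Variable R : realType.
Variables (U V : lmodType R) (p : U -> V).
Hypothesis Hp : forall (a : R) u u', p (a *: u + u') = a *: p u + p u'.
Lemma plin0 : p 0 = 0.
Proof. by have := Hp (-1) 0 0; rewrite scaler0 addr0 scaleN1r addNr. Qed.
Lemma plinD u u' : p (u + u') = p u + p u'.
Proof. by have := Hp 1 u u'; rewrite !scale1r. Qed.
Lemma plinZ a u : p (a *: u) = a *: p u.
Proof. by have := Hp a u 0; rewrite !addr0 plin0 addr0. Qed.
Lemma plinN u : p (- u) = - p u.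
Proof. by rewrite -scaleN1r plinZ scaleN1r. Qed.
End Lin.

Section G.
Variable R : realType.
Variables (nz nV nl : nat).
Local Notation n := (nz + nV + nl)%N.

Lemma gz_mk z v x : gz (@gmk R nz nV nl z v x) = z.
Proof. by rewrite /gz /gmk !row_mxKl. Qed.
Lemma gV_mk z v x : gV (@gmk R nz nV nl z v x) = v.
Proof. by rewrite /gV /gmk row_mxKl row_mxKr. Qed.
Lemma gl_mk z v x : gl (@gmk R nz nV nl z v x) = x.
Proof. by rewrite /gl /gmk row_mxKr. Qed.
Lemma gmk0 : @gmk R nz nV nl 0 0 0 = 0.
Proof. by rewrite /gmk !row_mx0. Qed.
Lemma gmk_lin a z v x z' v' x' :
  a *: @gmk R nz nV nl z v x + gmk z' v' x' = gmk (a *: z + z') (a *: v + v') (a *: x + x').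
Proof. by rewrite /gmk !scale_row_mx !add_row_mx. Qed.
Lemma gV_lin a (u u' : 'rV[R]_n) : gV (a *: u + u') = a *: gV u + gV u'.
Proof. by rewrite /gV !linearP. Qed.
Lemma gz_lin a (u u' : 'rV[R]_n) : gz (a *: u + u') = a *: gz u + gz u'.
Proof. by rewrite /gz !linearP. Qed.
Lemma gl_lin a (u u' : 'rV[R]_n) : gl (a *: u + u') = a *: gl u + gl u'.
Proof. by rewrite /gl !linearP. Qed.
Lemma gmkE (u : 'rV[R]_n) : u = gmk (gz u) (gV u) (gl u).
Proof. by rewrite /gmk /gz /gV /gl !hsubmxK. Qed.
End G.
Section Aux.
Variable R : realType.

Lemma scal_expand n (h : 'rV[R]_n -> R)
  (Hh : forall (a : R) u u', h (a *: u + u') = a * h u + h u') u :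
  h u = \sum_(i < n) u 0 i * h (delta_mx 0 i).
Proof.
have h0 : h 0 = 0.
  by have := Hh (-1) 0 0; rewrite scaler0 addr0 mulN1r addNr.
have hD : forall a b, h (a + b) = h a + h b.
  by move=> a b; have := Hh 1 a b; rewrite scale1r mul1r.
have hZ : forall c d, h (c *: d) = c * h d.
  by move=> c d; have := Hh c d 0; rewrite addr0 h0 addr0.
rewrite {1}(row_sum_delta u) (big_morph h hD h0).
by apply: eq_bigr => i _; rewrite hZ.
Qed.

Lemma vec_expand n m (h : 'rV[R]_n -> 'rV[R]_m)
  (Hh : forall (a : R) u u', h (a *: u + u') = a *: h u + h u') u :
  h u = u *m lin1_mx h.
Proof.
apply/rowP => j; rewrite mxE.
rewrite (@scal_expand n (fun u => h u 0 j)); last first.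
  by move=> a u1 u2; rewrite Hh !mxE.
by apply: eq_bigr => i _; rewrite mxE.
Qed.

Lemma mx_form0 n (M : 'M[R]_n) :
  (forall a b : 'rV[R]_n, a *m M *m b^T = 0) -> M = 0.
Proof.
move=> H; apply/matrixP => i j.
have := H (delta_mx 0 i) (delta_mx 0 j).
rewrite trmx_delta -rowE -colE => /matrixP /(_ 0 0).
by rewrite !mxE.
Qed.

End Aux.
Lemma mexp_nil3 (R : realType) n (A : 'M[R]_n) : A ^+ 3 = 0 ->
  mexp A = 1 + A + 2^-1 *: A ^+ 2.
Proof.
move=> A3.
have H : \forall N \near \oo, \sum_(k < N) ((k`!)%:R)^-1 *: A ^+ k = 1 + A + 2^-1 *: A ^+ 2.
  exists 3%N => // N /= HN.
  rewrite -(subnKC HN) -(big_mkord xpredT (fun k => ((k`!)%:R)^-1 *: A ^+ k)).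
  rewrite (big_cat_nat _ (n:=3)) //= ?leq_addr //.
  rewrite [X in _ + X]big1_seq ?addr0; last first.
    move=> k /andP[_]; rewrite mem_index_iota => /andP[Hk _].
    by rewrite -(subnK Hk) exprD A3 mulr0 scaler0.
  rewrite big_mkord !big_ord_recr big_ord0 /= add0r expr0 expr1 invr1 !scale1r.
  done.
rewrite /mexp.
have H2 := @cvg_near_cst _ _ _ _ _ eventually_filter H.
by rewrite (cvg_lim (@norm_hausdorff _ _) H2).
Qed.
Section Br.
Variable R : realType.
Variables (nz nV nl : nat).
Variables (brl : 'rV[R]_nl -> 'rV[R]_nl -> 'rV[R]_nl)
  (act : 'rV[R]_nl -> 'rV[R]_nV -> 'rV[R]_nV)
  (beta : 'rV[R]_nV -> 'rV[R]_nV -> 'rV[R]_nz).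
Hypothesis Hbrl : bilinear_map brl.
Hypothesis Hact : bilinear_map act.
Hypothesis Hbeta : bilinear_map beta.
Local Notation n := (nz + nV + nl)%N.
Local Notation br := (gbracket brl act beta).

Lemma br_lin (w : 'rV[R]_n) a u u' : br w (a *: u + u') = a *: br w u + br w u'.
Proof.
case: Hbrl => B1 B2; case: Hact => A1 A2; case: Hbeta => C1 C2.
rewrite /gbracket gmk_lin gV_lin gl_lin B2 C2 A2 A1.
congr gmk; rewrite scalerBr; set p := act (gl u) (gV w); set q := act (gl u') (gV w).
set s := act (gl w) (gV u); set t := act (gl w) (gV u').
rewrite !opprD !addrA; congr (_ + _); rewrite -!addrA; congr (_ + _).
by rewrite addrC.
Qed.

Lemma ad_mxE (w u : 'rV[R]_n) : u *m ad_mx br w = br w u.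
Proof. by rewrite /ad_mx -vec_expand //; apply: br_lin. Qed.

Lemma brw_eq (w0 : 'rV[R]_nV) u :
  br (gmk 0 w0 0) u = gmk (beta w0 (gV u)) (- act (gl u) w0) 0.
Proof.
case: Hbrl => B1 B2; case: Hact => A1 A2.
rewrite /gbracket gV_mk gl_mk (@plin0 _ _ _ _ (fun a x y => A1 a x y (gV u))).
rewrite (@plin0 _ _ _ _ (fun a x y => B1 a x y (gl u))) sub0r.
by []. Qed.

Lemma brw_brw (w0 : 'rV[R]_nV) z v :
  br (gmk 0 w0 0) (gmk z v 0) = gmk (beta w0 v) 0 0.
Proof.
case: Hact => A1 A2.
by rewrite brw_eq gV_mk gl_mk (@plin0 _ _ _ _ (fun a x y => A1 a x y w0)) oppr0.
Qed.

Lemma brw3 (w0 : 'rV[R]_nV) u :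
  br (gmk 0 w0 0) (br (gmk 0 w0 0) (br (gmk 0 w0 0) u)) = 0.
Proof.
case: Hbeta => C1 C2.
rewrite [X in br _ (br _ X)]brw_eq !brw_brw (@plin0 _ _ _ _ (fun a x y => C2 a w0 x y)).
exact: gmk0.
Qed.

Lemma mexp_w (w0 : 'rV[R]_nV) u :
  u *m mexp (ad_mx br (gmk 0 w0 0)) =
  u + br (gmk 0 w0 0) u + 2^-1 *: br (gmk 0 w0 0) (br (gmk 0 w0 0) u).
Proof.
set A := ad_mx br (gmk 0 w0 0).
have A3 : A ^+ 3 = 0.
  apply/row_matrixP => i; rewrite row0 rowE.
  by rewrite !exprS expr0 mulr1 -!mulmxE !mulmxA !ad_mxE brw3.
rewrite mexp_nil3 // !mulmxDr mulmx1 -scalemxAr expr2 mulmxA.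
by rewrite !ad_mxE.
Qed.
End Br.
Lemma mx11_0 (R : realType) (M : 'M[R]_1) : M 0 0 = 0 -> M = 0.
Proof. by move=> H; apply/matrixP => i j; rewrite !ord1 H mxE. Qed.

Lemma LA (R : realType) n (rho : 'rV[R]_n -> 'rV[R]_n) (g : 'rV[R]_n -> 'rV[R]_n -> R)
  (Hrho : forall (a : R) u u', rho (a *: u + u') = a *: rho u + rho u')
  (Hg1 : forall (a : R) u u' v, g (a *: u + u') v = a * g u v + g u' v)
  (Hg2 : forall (a : R) u v v', g u (a *: v + v') = a * g u v + g u v')
  (Hnd : forall a, (forall b, g a b = 0) -> a = 0)
  (Hinv : forall a b, g (rho a) b + g a (rho b) = 0)
  v : (forall k, rho k = 0 -> g k v = 0) -> exists w, rho w = v.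
Proof.
move=> Hk.
pose G : 'M[R]_n := \matrix_(i, j) g (delta_mx 0 i) (delta_mx 0 j).
have HG : forall a b, g a b = (a *m G *m b^T) 0 0.
  move=> a b.
  rewrite (@scal_expand _ _ (fun a => g a b)); last by move=> ? ? ?; apply: Hg1.
  rewrite mxE.
  have E : forall i, g (delta_mx 0 i) b =
      \sum_(j < n) b 0 j * g (delta_mx 0 i) (delta_mx 0 j).
    by move=> i; apply: scal_expand => ? ? ?; apply: Hg2.
  under eq_bigr do rewrite E big_distrr.
  rewrite exchange_big /=; apply: eq_bigr => j _.
  rewrite !mxE big_distrl /=; apply: eq_bigr => i _.
  by rewrite !mxE -mulrA [b 0 j * _]mulrC.
pose P := lin1_mx rho.
have HP : forall a, rho a = a *m P by move=> a0; apply: vec_expand.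
have HPG : P *m G = - (G *m P^T).
  apply/eqP; rewrite -addr_eq0; apply/eqP; apply: mx_form0 => a b.
  apply: mx11_0; rewrite mulmxDr mulmxDl.
  have -> : forall (M N : 'M[R]_1), (M + N) 0 0 = M 0 0 + N 0 0 by move=> M N; rewrite mxE.
  rewrite !mulmxA -HG -HP.
  have -> : a *m G *m P^T *m b^T = a *m G *m (b *m P)^T by rewrite trmx_mul mulmxA.
  by rewrite -HG -HP Hinv.
have Gu : G \in unitmx.
  rewrite -row_free_unit /row_free.
  have K0 : kermx G = 0.
    apply/row_matrixP => i; rewrite row0.
    have H0 : row i (kermx G) *m G = 0 by rewrite -row_mul mulmx_ker row0.
    apply: Hnd => b; rewrite HG H0 !mul0mx mxE //.
  have := mxrank_ker G; rewrite K0 mxrank0 => /esym/eqP.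
  by rewrite subn_eq0 => H; rewrite eqn_leq rank_leq_row H.
pose K := kermx P.
pose c := G *m v^T.
have Kc : K *m c = 0.
  apply/row_matrixP => i; rewrite row0 row_mul; apply: mx11_0.
  rewrite /c mulmxA -HG; apply: Hk; rewrite HP -row_mul mulmx_ker row0 //.
have s1 : (c^T <= kermx K^T)%MS by apply/sub_kermxP; rewrite -trmx_mul Kc trmx0.
have s2 : (P^T <= kermx K^T)%MS by apply/sub_kermxP; rewrite -trmx_mul mulmx_ker trmx0.
have Hrk : \rank P^T = \rank (kermx K^T).
  rewrite mxrank_ker mxrank_tr mxrank_ker mxrank_tr subKn //.
  exact: rank_leq_row.
have s3 : (kermx K^T <= P^T)%MS by rewrite -(mxrank_leqif_sup s2).2 Hrk.
have /submxP [D HD] := submx_trans s1 s3.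
have Hc : c = P *m D^T by rewrite -[c]trmxK HD trmx_mul trmxK.
exists (- (invmx G *m D^T)^T).
have E1 : P^T = - (invmx G *m P *m G).
  by rewrite -mulmxA HPG mulmxN mulmxA mulVmx // mul1mx opprK.
apply: trmx_inj; rewrite HP trmx_mul linearN /= trmxK mulmxN E1 mulNmx opprK.
rewrite -!mulmxA (mulmxA G) mulmxV // mul1mx -Hc /c mulmxA mulVmx // mul1mx.
by []. Qed.

Theorem theorem3p4 (R : realType) (nz nV nl : nat)
  (brl : 'rV[R]_nl -> 'rV[R]_nl -> 'rV[R]_nl)
  (act : 'rV[R]_nl -> 'rV[R]_nV -> 'rV[R]_nV)
  (beta : 'rV[R]_nV -> 'rV[R]_nV -> 'rV[R]_nz)
  (Hl : reductive brl)
  (HV : is_module brl act)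
  (Hbeta : invariant_skew act beta)
  (Hadm : admissible (gbracket brl act beta))
  (Hcenter : forall u : 'rV[R]_(nz + nV + nl),
      (forall u', gbracket brl act beta u u' = 0) <-> (gV u = 0 /\ gl u = 0))
  (Hf : exists f : 'rV[R]_nz -> R,
      [/\ forall (a : R) z z', f (a *: z + z') = a * f z + f z',
          forall v, (forall w, f (beta v w) = 0) -> v = 0 &
          exists y, forall v, v != 0 -> 0 < f (beta (act y v) v)])
  (x : 'rV[R]_(nz + nV + nl))
  (Hx : pointed (co (gbracket brl act beta) x)) :
  exists u, inn_orbit (gbracket brl act beta) x u /\ gV u = 0.
Proof.
case: Hl => [[Hbrl _ _] _]; case: HV => Hact _; case: Hbeta => Hb Hskew Hinvb.
case: Hf => f [Hflin Hnd _].
have f0 : f 0 = 0.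
  by have := Hflin (-1) 0 0; rewrite scaler0 addr0 mulN1r addNr.
have fD : forall z z', f (z + z') = f z + f z'.
  by move=> z z'; have := Hflin 1 z z'; rewrite scale1r mul1r.
have gVD : forall u u' : 'rV[R]_(nz + nV + nl), gV (u + u') = gV u + gV u'.
  by move=> u u'; have := @gV_lin _ _ _ _ 1 u u'; rewrite !scale1r.
have gVZ : forall a (u : 'rV[R]_(nz + nV + nl)), gV (a *: u) = a *: gV u.
  by move=> a u; have := @gV_lin _ _ _ _ a u 0; rewrite !addr0 /gV !linear0 addr0.
have orb : forall w0, inn_orbit (gbracket brl act beta) x
    (x *m mexp (ad_mx (gbracket brl act beta) (gmk 0 w0 0))).
  move=> w0; exists (mexp (ad_mx (gbracket brl act beta) (gmk 0 w0 0))) => //.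
  by exists [:: (true, gmk 0 w0 0)]; rewrite /= /gen_elt /= mulmx1.
set X := gl x; set v := gV x.
have [Hall | Hnall] := pselect (forall k, act X k = 0 -> f (beta k v) = 0).
  have [w Hw] : exists w, act X w = v.
    apply: (@LA R nV (act X) (fun a b => f (beta a b))) => //.
    - by move=> a u u'; case: Hact => _ A2; apply: A2.
    - by move=> a u u' v'; case: Hb => C1 _; rewrite C1 Hflin.
    - by move=> a u u' v'; case: Hb => _ C2; rewrite C2 Hflin.
    - by move=> a b; rewrite -fD Hinvb.
  exists (x *m mexp (ad_mx (gbracket brl act beta) (gmk 0 w 0))); split => //.
  rewrite (@mexp_w _ _ _ _ _ _ _ Hbrl Hact Hb) !gVD gVZ.
  rewrite (@brw_eq _ _ _ _ _ _ _ Hbrl Hact) (@brw_brw _ _ _ _ _ _ _ Hbrl Hact).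
  by rewrite !gV_mk scaler0 addr0 -/X Hw subrr.
have [k [Hk1 Hk2]] : exists k, act X k = 0 /\ f (beta k v) <> 0.
  apply: contrapT => nQ; apply: Hnall => k Hk; apply: contrapT => Hne.
  by apply: nQ; exists k.
exfalso; apply: Hx; exists x, (gmk (beta k v) 0 0); split.
  apply/eqP => H0; have := congr1 (@gz R nz nV nl) H0; rewrite gz_mk /gz !linear0 => Hbk.
  by apply: Hk2; rewrite Hbk.
move=> t; apply: subset_closure.
exists 1%N, (fun _ => 1), (fun _ => x + t *: gmk (beta k v) 0 0); split => //.
- by rewrite big_ord1.
- move=> _; have -> : x + t *: gmk (beta k v) 0 0 =
      x *m mexp (ad_mx (gbracket brl act beta) (gmk 0 (t *: k) 0)); last exact: orb.
  rewrite (@mexp_w _ _ _ _ _ _ _ Hbrl Hact Hb) (@brw_eq _ _ _ _ _ _ _ Hbrl Hact).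
  case: Hact => A1 A2; case: Hb => C1 C2.
  rewrite -/X -/v (@plinZ _ _ _ _ (A2 ^~ X)) Hk1 scaler0 oppr0.
  rewrite (@plinZ _ _ _ _ (fun a x y => C1 a x y v)).
  rewrite (@brw_brw _ _ _ _ _ _ _ Hbrl (conj A1 A2)).
  rewrite (@plin0 _ _ _ _ (fun a x y => C2 a (t *: k) x y)) gmk0 scaler0 addr0.
  by rewrite /gmk !scale_row_mx !scaler0.
- by rewrite big_ord1 scale1r.
Qed.
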